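(* Let $\mathcal{S}$ be the stabilizer group of an $[[n,1,3]]$ stabilizer code on $n$ qubits. Let $g \in \mathcal{S}$ be a stabilizer generator of weight $w_g > 3$, written as $g = P_{a_1} P_{a_2} \cdots P_{a_{w_g}}$, where $a_1, \dots, a_{w_g}$ are the distinct qubits on which $g$ acts nontrivially, listed in the order in which the ancilla-controlled gates $\mathrm{C}\text{-}P_{a_1}, \dots, \mathrm{C}\text{-}P_{a_{w_g}}$ are applied during bare-ancilla syndrome extraction, and each $P_{a_i} \in \{X, Y, Z\}$ acts on qubit $a_i$. For $1 \le i \le w_g$ let $\rho_g(a_i) = \prod_{j \ge i} P_{a_j}$ (the hook error on the data qubits caused by a single Pauli error on the ancilla immediately before the gate $\mathrm{C}\text{-}P_{a_i}$), and let $$\mathcal{U}_g = \{\rho_g(a_i) : 1\le i\le w_g,\ w(\rho_g(a_i)) > 1 \text{ and } w(\rho_g(a_i)\, s) > 1 \text{ for all } s \in \mathcal{S}\}.$$ Then $|\mathcal{U}_g| \le w_g - 3$.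
   Context: For a Pauli operator $E$ on $n$ qubits, $w(E)$ denotes its weight, i.e. the number of qubits on which $E$ acts nontrivially (global phases are ignored). The weight $w_g$ of a generator $g$ is its weight in this sense. Bare-ancilla syndrome extraction of $g$: a single ancilla is prepared in $|+\rangle$, the ancilla-controlled gates $\mathrm{C}\text{-}P_{a_1}, \dots, \mathrm{C}\text{-}P_{a_{w_g}}$ targeting the data qubits $a_1,\dots,a_{w_g}$ are applied in this order, and the ancilla is measured in the $X$ basis. Elements of $\mathcal{U}_g$ are called uncorrectable hook errors. *)

(* Defs.v *)
From mathcomp Require Import all_boot all_order all_algebra.
Set Implicit Arguments. Unset Strict Implicit. Unset Printing Implicit Defensive.
Import GRing.Theory.

(* Single-qubit Pauli (modulo phase) in symplectic form (x, z):
   I = (false,false), X = (true,false), Z = (false,true), Y = (true,true). *)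
Definition pauli1 := (bool * bool)%type.
Definition pI : pauli1 := (false, false).

(* Exponent k such that  a * b = i^k * (a xor b)  for single-qubit Paulis
   (Y is the Hermitian Y = iXZ). *)
Definition phase1 (a b : pauli1) : nat :=
  match a, b with
  | (true, false), (false, true) => 3   (* X Z = -i Y *)
  | (false, true), (true, false) => 1   (* Z X =  i Y *)
  | (true, false), (true, true)  => 1   (* X Y =  i Z *)
  | (true, true),  (true, false) => 3   (* Y X = -i Z *)
  | (true, true),  (false, true) => 1   (* Y Z =  i X *)
  | (false, true), (true, true)  => 3   (* Z Y = -i X *)
  | _, _ => 0
  end.

Definition xor1 (a b : pauli1) : pauli1 := (a.1 (+) b.1, a.2 (+) b.2).

(* An n-qubit Pauli operator  i^k * P_1 (x) ... (x) P_n, k in Z/4. *)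
Definition pauli (n : nat) := ('Z_4 * {ffun 'I_n -> pauli1})%type.

Definition pmul n (E F : pauli n) : pauli n :=
  ((E.1 + F.1 + \sum_(i < n) (phase1 (E.2 i) (F.2 i))%:R)%R,
   [ffun i => xor1 (E.2 i) (F.2 i)]).

Definition pid n : pauli n := (0%R, [ffun => pI]).
Definition pminus_id n : pauli n := (2%:R%R, [ffun => pI]).

Definition weight n (E : pauli n) : nat := #|[set i | E.2 i != pI]|.

Definition pcommute n (E F : pauli n) : Prop := pmul E F = pmul F E.

Definition mul_closed n (T : {set pauli n}) : Prop :=
  forall E F, E \in T -> F \in T -> pmul E F \in T.

Definition stabilizer_group n (S : {set pauli n}) : Prop :=
  [/\ pid n \in S, mul_closed S,
      (forall E F, E \in S -> F \in S -> pcommute E F)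
    & pminus_id n \notin S].

Definition generates n (S G : {set pauli n}) : Prop :=
  G \subset S /\
  forall T : {set pauli n}, G \subset T -> pid n \in T -> mul_closed T -> S \subset T.

Definition independent_generators n (S G : {set pauli n}) : Prop :=
  generates S G /\ forall x, x \in G -> ~ generates S (G :\ x).

Definition logical n (S : {set pauli n}) (E : pauli n) : Prop :=
  (forall s, s \in S -> pcommute E s) /\ (forall c : 'Z_4, (c, E.2) \notin S).

Definition code_distance n (S : {set pauli n}) (d : nat) : Prop :=
  (forall E, logical S E -> d <= weight E) /\
  exists E, logical S E /\ weight E = d.

Definition stabilizer_code n (k d : nat) (S G : {set pauli n}) : Prop :=
  [/\ stabilizer_group S, independent_generators S G, #|G| = n - k & code_distance S d].

(* hook error rho_g(a_i) = prod_{j >= i} P_{a_j}, where the gates act on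
   qubits a 0, ..., a (w-1) in that order *)
Definition hook n (g : pauli n) w (a : 'I_w -> 'I_n) (i : 'I_w) : pauli n :=
  (0%R, [ffun q => if [exists j : 'I_w, (i <= j) && (a j == q)] then g.2 q else pI]).

Definition uncorrectable_hooks n (S : {set pauli n}) (g : pauli n) w
    (a : 'I_w -> 'I_n) : {set pauli n} :=
  [set hook g a i | i in [pred i : 'I_w | (1 < weight (hook g a i)) &&
       [forall s in S, 1 < weight (pmul (hook g a i) s)]]].

(* Main.v *)
Require Import Defs.
From mathcomp Require Import all_boot all_order all_algebra.
From mathcomp Require Import zify.

Lemma weight_le1 n (E : pauli n) (x : 'I_n) :
  (forall q, q != x -> E.2 q = pI) -> weight E <= 1.
Proof.
move=> H; rewrite /weight; apply: leq_trans (_ : #|[set x]| <= 1); last by rewrite cards1.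
apply: subset_leq_card.
apply/subsetP => q; rewrite !inE; apply: contraR => /H ->; by [].
Qed.

Theorem lemma1 (n : nat) (S G : {set pauli n}) (g : pauli n)
    (w : nat) (a : 'I_w -> 'I_n) :
  stabilizer_code 1 3 S G ->
  g \in G ->
  injective a ->
  (forall q : 'I_n, (q \in codom a) = (g.2 q != pI)) ->
  3 < w ->
  #|uncorrectable_hooks S g a| <= w - 3.
Proof.
move=> [_ [[GS _] _] _ _] gG _ Hcod w3.
have gS : g \in S by apply: (subsetP GS).
have w0 : 0 < w by apply: leq_trans w3.
have w1 : 1 < w by apply: leq_trans w3.
have wl : w.-1 < w by rewrite prednK.
pose i0 := Ordinal w0. pose i1 := Ordinal w1. pose il := Ordinal wl.
have gpI : forall q, q \notin codom a -> g.2 q = pI.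
  by move=> q; rewrite Hcod negbK => /eqP.
have hook_g : forall i : 'I_w, i <= 1 -> weight (pmul (hook g a i) g) <= 1.
  move=> i hi; apply: (@weight_le1 _ _ (a i0)) => q hq.
  rewrite /pmul /= ffunE /hook /= ffunE.
  case: (boolP (q \in codom a)) => qc; last first.
    by rewrite (gpI _ qc); case: ifP => _; rewrite /xor1 /= ?addbb.
  case/codomP: qc => j ->{q} in hq *.
  have -> : [exists j0 : 'I_w, (i <= j0) && (a j0 == a j)].
    case: (j =P i0) hq => [-> |]; first by rewrite eqxx.
    move=> nj _; apply/existsP; exists j; rewrite eqxx andbT.
    apply: leq_trans hi _; case: j nj => [[|m] pm] //= nj.
    by exfalso; apply: nj; apply: val_inj.
  by rewrite /xor1 !addbb; case: (g.2 (a j)).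
rewrite /uncorrectable_hooks; apply: leq_trans (leq_imset_card _ _) _.
apply: leq_trans (subset_leq_card (_ : _ \subset ~: [set i0; i1; il])) _.
  apply/subsetP => i; rewrite inE /= => /andP [hw /forallP hs].
  rewrite !inE; apply/negP => H; case/orP: H => [/orP [] |] /eqP ei.
  - have := hs g; rewrite gS /= => H.
    by have := hook_g i ltac:(by rewrite ei); rewrite leqNgt H.
  - have := hs g; rewrite gS /= => H.
    by have := hook_g i ltac:(by rewrite ei); rewrite leqNgt H.
  - suff : weight (hook g a i) <= 1 by rewrite leqNgt hw.
    apply: (@weight_le1 _ _ (a il)) => q hq; rewrite /hook /= ffunE.
    case: ifP => // /existsP [j /andP [hj /eqP hq']].
    have : j = il.
      apply: val_inj => /=; move: hj; rewrite ei /= => hj.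
      have := ltn_ord j; lia.
    by move=> ej; rewrite -hq' ej eqxx in hq.
rewrite cardsCs setCK card_ord.
have -> : #|[set i0; i1; il]| = 3.
  rewrite -setUA cardsU1 cards2 !inE.
  have n01 : i0 != i1 by [].
  have n0l : i0 != il by apply/eqP => /(congr1 val) /= e; move: w3; rewrite -(prednK w0) -e.
  have n1l : i1 != il by apply/eqP => /(congr1 val) /= e; move: w3; rewrite -(prednK w0) -e.
  by rewrite (negbTE n01) (negbTE n0l) n1l.
by [].
Qed.
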